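(* For every integer $n\ge3$, if $T$ is a uniformly random standard Young tableau of shape $(n,n,n)$, then $$\Pr(T_{1,3}=7)=\frac{5n(n+1)^2(n+2)}{9(3n-1)(3n-2)(3n-4)(3n-5)}.$$
   Context: A standard Young tableau of shape $(n,n,n)$ is a bijective filling $T$ of the cells $[a,b]$ ($1\le a\le 3$, $1\le b\le n$; row $a$, column $b$) by $\{1,\dots,3n\}$ that increases along each row and down each column. $T_{a,b}$ denotes the entry in cell $[a,b]$. *)

(* Defs.v *)
From HB Require Import structures.
From mathcomp Require Import all_boot all_order all_algebra.
Set Implicit Arguments. Unset Strict Implicit. Unset Printing Implicit Defensive.

(* Cell [a,b] (1 <= a <= 3, 1 <= b <= n) is encoded as (a-1, b-1) : 'I_3 * 'I_n,
   and the ordinal value k : 'I_(3*n) encodes the entry k+1 in {1,...,3n}. *)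

Definition filling (n : nat) := {ffun 'I_3 * 'I_n -> 'I_(3 * n)}.

(* The entry T_{a,b} as a number in {1,...,3n} (a, b are 1-based cell coordinates;
   cells out of range are not used). *)
Definition entry n (T : filling n) (a b : nat) : nat :=
  match insub a.-1, insub b.-1 with
  | Some i, Some j => (T (i, j)).+1
  | _, _ => 0
  end.

Definition is_SYT n (T : filling n) : bool :=
  [&& injectiveb T,
      [forall k : 'I_(3 * n), exists c, T c == k],
      [forall a : 'I_3, forall b : 'I_n, forall b' : 'I_n,
          (b < b')%N ==> (T (a, b) < T (a, b'))%N] &
      [forall a : 'I_3, forall a' : 'I_3, forall b : 'I_n,
          (a < a')%N ==> (T (a, b) < T (a', b))%N]].

Definition prob_SYT n (P : pred (filling n)) : rat :=
  (#|[set T : filling n | is_SYT T && P T]|%:R / #|[set T : filling n | is_SYT T]|%:R)%R.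

(* Main.v *)
Require Import Defs.
From mathcomp Require Import all_boot all_order all_algebra.
From mathcomp Require Import zify ring lra.
Set Implicit Arguments. Unset Strict Implicit. Unset Printing Implicit Defensive.
Import GRing.Theory Num.Theory.


Definition state := (nat * nat * nat)%type.
Definition step (st : state) (i : nat) : option state :=
  let: (x0, d1, d2) := st in
  match i with
  | 0 => if 0 < x0 then Some (x0.-1, d1.+1, d2) else None
  | 1 => if 0 < d1 then Some (x0, d1.-1, d2.+1) else None
  | 2 => if 0 < d2 then Some (x0, d1, d2.-1) else None
  | _ => None end.
Definition final (st : state) : bool := st == (0,0,0).
Fixpoint ok (st : state) (w : seq nat) : bool :=
  match w with [::] => final st
  | i :: w' => if step st i is Some st' then ok st' w' else false end.
Fixpoint allwords m : seq (seq nat) :=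
  if m is m'.+1 then [seq i :: w | i <- [:: 0; 1; 2], w <- allwords m'] else [:: [::]].

Lemma allwordsS m : allwords m.+1 = [seq i :: w | i <- [:: 0; 1; 2], w <- allwords m].
Proof. by []. Qed.

Lemma sum_allwordsS m (F : seq nat -> nat) :
  \sum_(w <- allwords m.+1) F w =
  \sum_(w <- allwords m) F (0 :: w) + \sum_(w <- allwords m) F (1 :: w)
  + \sum_(w <- allwords m) F (2 :: w).
Proof. by rewrite allwordsS big_allpairs_dep !big_cons big_nil /= addn0 addnA. Qed.

Definition cnt st m := \sum_(w <- allwords m) ok st w.

Lemma sum0 (s : seq (seq nat)) : \sum_(w <- s) (false : nat) = 0.
Proof. by rewrite big1. Qed.

Definition Dn x0 d1 d2 := (x0 + d1 + d2 + 2)`! * (x0 + d1 + 1)`! * x0`!.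
Definition Pn d1 d2 := (d2 + 1) * (d1 + d2 + 2) * (d1 + 1).

Lemma mulE S X X' c Y Q : S * X = Y * Q -> X' = c * X -> S * X' = Y * (c * Q).
Proof. by move=> H ->; rewrite mulnCA H mulnCA. Qed.

Lemma cnt_formula m : forall x0 d1 d2, m = 3 * x0 + 2 * d1 + d2 ->
  cnt (x0, d1, d2) m * Dn x0 d1 d2 = m`! * Pn d1 d2.
Proof.
elim: m => [|m IH] x0 d1 d2 Hm.
  have [-> [-> ->]] : x0 = 0 /\ d1 = 0 /\ d2 = 0 by lia.
  by rewrite /cnt /= big_cons big_nil.
rewrite /cnt sum_allwordsS !(mulnDl _ _ (Dn _ _ _)).
have E0 : (\sum_(w <- allwords m) ok (x0, d1, d2) (0 :: w)) * Dn x0 d1 d2 =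
   m`! * (x0 * Pn d1.+1 d2).
  case: x0 Hm => [|a] Hm /=; first by rewrite sum0 muln0.
  apply: (mulE (IH a d1.+1 d2 ltac:(lia))).
  rewrite /Dn (_ : a.+1 + d1 + d2 + 2 = a + d1.+1 + d2 + 2); last by lia.
  rewrite (_ : a.+1 + d1 + 1 = a + d1.+1 + 1); last by lia.
  rewrite (factS a).
  ring.
have E1 : (\sum_(w <- allwords m) ok (x0, d1, d2) (1 :: w)) * Dn x0 d1 d2 =
   m`! * (if d1 is b.+1 then (x0 + d1 + 1) * Pn b d2.+1 else 0).
  clear E0; case: d1 Hm => [|b] Hm /=; first by rewrite sum0 muln0.
  apply: (mulE (IH x0 b d2.+1 ltac:(lia))).
  rewrite /Dn (_ : x0 + b.+1 + d2 + 2 = x0 + b + d2.+1 + 2); last by lia.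
  rewrite (_ : x0 + b.+1 + 1 = (x0 + b + 1).+1); last by lia.
  rewrite (factS (x0 + b + 1)).
  ring.
have E2 : (\sum_(w <- allwords m) ok (x0, d1, d2) (2 :: w)) * Dn x0 d1 d2 =
   m`! * (if d2 is c.+1 then (x0 + d1 + d2 + 2) * Pn d1 c else 0).
  clear E0 E1; case: d2 Hm => [|c] Hm /=; first by rewrite sum0 muln0.
  apply: (mulE (IH x0 d1 c ltac:(lia))).
  rewrite /Dn (_ : x0 + d1 + c.+1 + 2 = (x0 + d1 + c + 2).+1); last by lia.
  rewrite (factS (x0 + d1 + c + 2)).
  ring.
rewrite E0 E1 E2 (factS m) Hm /Pn.
clear E0 E1 E2 Hm IH; case: d1 => [|b]; case: d2 => [|c]; ring.
Qed.

Definition Q (w : seq nat) : bool := (nth 0 w 6 == 0) && (count (pred1 0) (take 6 w) == 2).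
Fixpoint runp (st : state) (w : seq nat) : option state :=
  match w with [::] => Some st
  | i :: w' => if step st i is Some st' then runp st' w' else None end.
Definition pp u := Q u && (runp (3,0,0) u != None).

Lemma okcat st u v : ok st (u ++ v) = if runp st u is Some st' then ok st' v else false.
Proof. elim: u st => [|i u IH] st //=; case: step => //. Qed.

Lemma sum_allwords_cat m1 m2 (F : seq nat -> nat) :
  \sum_(w <- allwords (m1 + m2)) F w =
  \sum_(u <- allwords m1) \sum_(v <- allwords m2) F (u ++ v).
Proof.
elim: m1 F => [|m1 IH] F; first by rewrite add0n /= big_cons big_nil addn0.
by rewrite addSn !sum_allwordsS !IH.
Qed.

Lemma size_allwords m w : w \in allwords m -> size w = m.
Proof.
elim: m w => [|m IH] w; first by rewrite inE => /eqP ->.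
by rewrite allwordsS => /allpairsP [[i u] [_ /IH /= <- ->]].
Qed.

Lemma runp_shift k u x0 d1 d2 : count (pred1 0) u <= x0 ->
  runp (x0 + k, d1, d2) u = omap (fun st => (st.1.1 + k, st.1.2, st.2)) (runp (x0, d1, d2) u).
Proof.
elim: u x0 d1 d2 => [|i u IH] x0 d1 d2 //=.
case: i => [|[|[|i]]] //=.
- case: x0 => [|x0] //= H; exact: IH.
- move=> H; case: d1 => [|d1] //=; exact: IH.
- move=> H; case: d2 => [|d2] //=; exact: IH.
Qed.

Lemma Qbound : all (fun u => Q u ==> (count (pred1 0) u <= 3)) (allwords 7).
Proof. by vm_compute. Qed.

Lemma filt7 : [seq u <- allwords 7 | pp u] =
  [:: [:: 0; 0; 1; 1; 2; 2; 0]; [:: 0; 0; 1; 2; 1; 2; 0];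
      [:: 0; 1; 0; 1; 2; 2; 0]; [:: 0; 1; 0; 2; 1; 2; 0];
      [:: 0; 1; 2; 0; 1; 2; 0]].
Proof. by vm_compute. Qed.

Lemma event_count k :
  \sum_(w <- allwords (3 * (k + 3))) (ok (k + 3, 0, 0) w && Q w) = 5 * cnt (k, 1, 0) (3 * k + 2).
Proof.
rewrite (_ : 3 * (k + 3) = 7 + (3 * k + 2)); last by lia.
rewrite sum_allwords_cat.
transitivity (\sum_(u <- allwords 7) (if pp u then
   (if runp (3,0,0) u is Some st then cnt (st.1.1 + k, st.1.2, st.2) (3 * k + 2) else 0) else 0)).
  rewrite big_seq_cond [RHS]big_seq_cond; apply: eq_bigr => u /andP[uin _].
  have su := size_allwords uin.
  have QE : forall v, Q (u ++ v) = Q u.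
    move=> v; rewrite /Q nth_cat su /= take_cat su /=. done.
  under eq_bigr => v _ do rewrite QE okcat.
  have := allP Qbound u uin.
  rewrite /pp; case: (Q u) => /=; last by under eq_bigr => v _ do rewrite andbF; rewrite sum0.
  move=> Hc.
  under eq_bigr => v _ do rewrite andbT.
  rewrite (addnC k 3) runp_shift //.
  by case: (runp _ u) => [st|] //=; rewrite sum0.
rewrite -big_mkcond -big_filter filt7 !big_cons big_nil /= add0n. lia.
Qed.


Lemma allwords_uniq m : uniq (allwords m).
Proof.
elim: m => [|m IH] //; rewrite allwordsS allpairs_uniq //.
by move=> [i u] [j v] _ _ /= [-> ->].
Qed.

Lemma mem_allwords m w : (w \in allwords m) = (size w == m) && all (fun i => i < 3) w.
Proof.
elim: m w => [|m IH] w; first by case: w.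
rewrite allwordsS; apply/idP/idP.
- move=> /allpairsP [[i u] [/= Hi Hu ->]]; move: Hu; rewrite IH => /andP[/eqP <- Hu].
  rewrite /= eqxx Hu andbT /=.
  by move: Hi; rewrite !inE => /or3P[]/eqP->.
- case: w => [|i u]; first by [].
  move=> /andP [Hs /andP[Hi Hu]]; apply/allpairsP; exists (i, u); split => //=.
  + by move: Hi {Hs}; case: i => [|[|[|]]].
  + by rewrite IH; apply/andP; split.
Qed.

Definition cN (i : nat) (s : seq nat) := @count nat (pred1 i) s.

Lemma ok_of x0 d1 d2 w :
  (forall k, cN 0 (take k w) <= x0 /\ cN 1 (take k w) <= d1 + cN 0 (take k w)
             /\ cN 2 (take k w) <= d2 + cN 1 (take k w)) ->
  all (fun i => i < 3) w -> cN 0 w = x0 -> cN 1 w = d1 + cN 0 w -> cN 2 w = d2 + cN 1 w ->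
  ok (x0, d1, d2) w.
Proof.
elim: w x0 d1 d2 => [|i w IH] x0 d1 d2 H.
  rewrite /cN /= => _ E0 E1 E2.
  have [-> [-> ->]] : x0 = 0 /\ d1 = 0 /\ d2 = 0 by lia.
  by [].
move=> /= /andP[Hi Hw].
have H1 := H 1. rewrite /cN /= take0 /= in H1.
case: i Hi H H1 => [|[|[|i]]] // _ H H1 /= E0 E1 E2.
- case: x0 H H1 E0 E1 E2 => [|x0] H H1 E0 E1 E2; first by lia.
  apply: IH => //=; try lia.
  move=> k; have := H k.+1; rewrite /cN /=; lia.
- case: d1 H H1 E0 E1 E2 => [|d1] H H1 E0 E1 E2; first by lia.
  apply: IH => //=; try lia.
  move=> k; have := H k.+1; rewrite /cN /=; lia.
- case: d2 H H1 E0 E1 E2 => [|d2] H H1 E0 E1 E2; first by lia.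
  apply: IH => //=; try lia.
  move=> k; have := H k.+1; rewrite /cN /=; lia.
Qed.

Lemma of_ok x0 d1 d2 w : ok (x0, d1, d2) w ->
  (forall k, cN 0 (take k w) <= x0 /\ cN 1 (take k w) <= d1 + cN 0 (take k w)
             /\ cN 2 (take k w) <= d2 + cN 1 (take k w)) /\
  all (fun i => i < 3) w /\ cN 0 w = x0 /\ cN 1 w = d1 + cN 0 w /\ cN 2 w = d2 + cN 1 w.
Proof.
elim: w x0 d1 d2 => [|i w IH] x0 d1 d2 /=.
  by rewrite /final => /eqP [-> -> ->]; split => // k; rewrite /cN take_nil.
case: i => [|[|[|i]]] //=.
- case: x0 => [|x0] //= /IH [H [Ha [E0 [E1 E2]]]]; split.
    case=> [|k]; first by rewrite /cN /=; lia.
    have := H k; rewrite /cN /=; lia.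
  by rewrite Ha; move: E0 E1 E2; rewrite /cN /=; lia.
- case: d1 => [|d1] //= /IH [H [Ha [E0 [E1 E2]]]]; split.
    case=> [|k]; first by rewrite /cN /=; lia.
    have := H k; rewrite /cN /=; lia.
  by rewrite Ha; move: E0 E1 E2; rewrite /cN /=; lia.
- case: d2 => [|d2] //= /IH [H [Ha [E0 [E1 E2]]]]; split.
    case=> [|k]; first by rewrite /cN /=; lia.
    have := H k; rewrite /cN /=; lia.
  by rewrite Ha; move: E0 E1 E2; rewrite /cN /=; lia.
Qed.


Fixpoint posn (s : seq nat) (a b : nat) : nat :=
  match s with
  | [::] => 0
  | x :: s' => if x == a then (if b is b'.+1 then (posn s' a b').+1 else 0)
               else (posn s' a b).+1
  end.

Lemma posn_spec s a b : b < count (pred1 a) s ->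
  [/\ posn s a b < size s, nth 0 s (posn s a b) = a & count (pred1 a) (take (posn s a b) s) = b].
Proof.
elim: s b => [|x s IH] b //=.
case: eqP => [->|ne] /=.
  case: b => [|b] /=; first by [].
  by rewrite eqxx add1n ltnS => /IH [H1 H2 H3]; rewrite H3 H2.
rewrite add0n => /IH [H1 H2 H3]; split => //.
by move/eqP/negbTE: ne => ->; rewrite H3.
Qed.

Lemma posn_uniq s a b j : j < size s -> nth 0 s j = a ->
  count (pred1 a) (take j s) = b -> posn s a b = j.
Proof.
elim: s b j => [|x s IH] b j //=.
case: j => [|j] /=.
  move=> _ /= Hx <-; subst x; by rewrite eqxx.
rewrite ltnS => Hj Hn.
case Hxa: (x == a) => /=.
  by rewrite add1n => <-; rewrite (IH (count (pred1 a) (take j s)) j).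
by rewrite add0n => Hc; rewrite (IH b j).
Qed.

Lemma count_take_mono (p : pred nat) s i j : i <= j ->
  count p (take i s) <= count p (take j s).
Proof.
elim: s i j => [|x s IH] [|i] [|j] //= H.
by rewrite leq_add2l IH.
Qed.

Lemma count_take_le (p : pred nat) s i : count p (take i s) <= count p s.
Proof. by rewrite -{2}(cat_take_drop i s) count_cat leq_addr. Qed.

Lemma count_take_nth (p : pred nat) s j : j < size s ->
  count p (take j.+1 s) = count p (take j s) + p (nth 0 s j).
Proof. by move=> H; rewrite (take_nth 0 H) -cats1 count_cat /= addn0. Qed.


Lemma card_ltm n m : m <= n -> #|[set b : 'I_n | val b < m]| = m.
Proof.
move=> Hmn.
have -> : [set b : 'I_n | val b < m] = widen_ord Hmn @: [set: 'I_m].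
  apply/setP => x; rewrite inE; apply/idP/imsetP.
    by move=> Hx; exists (Ordinal Hx) => //; apply: val_inj.
  by case=> y _ ->; case: y.
by rewrite card_imset ?cardsT ?card_ord //; by move=> y z /(congr1 val) /= /val_inj.
Qed.

Definition rowofn n (T : filling n) (j : nat) : nat :=
  if [pick c | val (T c) == j] is Some c then val c.1 else 0.
Definition word n (T : filling n) : seq nat := mkseq (rowofn T) (3 * n).

Lemma SYTP n (T : filling n) : is_SYT T ->
  [/\ injective T, forall k, exists c, T c = k,
      (forall a b b', val b < val b' -> T (a, b) < T (a, b')) &
      (forall a a' b, val a < val a' -> T (a, b) < T (a', b))].
Proof.
case/and4P => /injectiveP Hi /forallP Hs /forallP Hr /forallP Hc; split => //.
- by move=> k; have /existsP [c /eqP] := Hs k; exists c.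
- by move=> a b b' H; have /forallP/(_ b)/forallP/(_ b')/implyP := Hr a; apply.
- by move=> a a' b H; have /forallP/(_ a')/forallP/(_ b)/implyP := Hc a; apply.
Qed.

Lemma rowofnE n (T : filling n) c : is_SYT T -> rowofn T (T c) = c.1.
Proof.
case/SYTP => Hi _ _ _; rewrite /rowofn; case: pickP => [c' /eqP /val_inj /Hi -> //|].
by move/(_ c); rewrite eqxx.
Qed.

Lemma size_word n (T : filling n) : size (word T) = 3 * n.
Proof. exact: size_mkseq. Qed.

Lemma nth_word n (T : filling n) j : j < 3 * n -> nth 0 (word T) j = rowofn T j.
Proof. exact: nth_mkseq. Qed.

Lemma card_row n (T : filling n) a b : is_SYT T ->
  #|[set b' | T (a, b') < T (a, b)]| = b.
Proof.
case/SYTP => _ _ Hr _.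
rewrite -(card_ltm (ltnW (ltn_ord b))); apply: eq_card => b'; rewrite !inE.
apply/idP/idP => H; last exact: Hr.
rewrite ltnNge; apply/negP => Hb.
move: Hb; rewrite leq_eqVlt => /orP [/eqP Hb|Hb].
  by move: H; rewrite (_ : b = b') ?ltnn //; apply: val_inj.
by have := Hr a _ _ Hb; rewrite ltnNge (ltnW H).
Qed.

Lemma K n (T : filling n) (a : 'I_3) k : is_SYT T ->
  count (pred1 (val a)) (take k (word T)) = #|[set b | T (a, b) < k]|.
Proof.
move=> HT; have [Hi Hs Hr Hc] := SYTP HT.
elim: k => [|k IH].
  rewrite take0 /=; apply/esym/eqP; rewrite cards_eq0; apply/eqP/setP => b.
  by rewrite !inE ltn0.
case: (ltnP k (3 * n)) => Hk.
  rewrite count_take_nth ?size_word // IH nth_word //.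
  have [c Tc] := Hs (Ordinal Hk).
  have Rk : rowofn T k = c.1 by rewrite -(rowofnE c HT) Tc.
  have -> : [set b | T (a, b) < k.+1] = [set b | T (a, b) < k] :|: [set b | val (T (a, b)) == k].
    by apply/setP => b; rewrite !inE ltnS leq_eqVlt orbC.
  rewrite cardsU.
  have -> : [set b | T (a, b) < k] :&: [set b | val (T (a, b)) == k] = set0.
    apply/setP => b; rewrite !inE; apply/negP => /andP [H1 /eqP H2].
    by move: H1; rewrite H2 ltnn.
  rewrite cards0 subn0; congr (_ + _).
  rewrite /= Rk.
  case: (eqVneq c.1 a) => [Ea|Na].
    rewrite Ea eqxx.
    have -> : [set b | val (T (a, b)) == k] = [set c.2].
      apply/setP => b; rewrite !inE; apply/eqP/eqP.
        move=> H; have : T (a, b) = T c by apply: val_inj; rewrite Tc.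
        by move/Hi; rewrite -Ea; case: c {Tc Rk Ea} => c1 c2 /= [].
      by move=> ->; rewrite -Ea -surjective_pairing Tc.
    by rewrite cards1.
  have -> : (val c.1 == val a) = false by apply/negbTE.
  apply/eqP; rewrite eq_sym cards_eq0; apply/eqP/setP => b; rewrite !inE.
  apply/negP => /eqP H; have : T (a, b) = T c by apply: val_inj; rewrite Tc.
  by move/Hi => E; move: Na; rewrite -E eqxx.
have E1 : take k.+1 (word T) = take k (word T).
  by rewrite !take_oversize ?size_word //; lia.
rewrite E1 IH; apply: eq_card => b; rewrite !inE.
have := ltn_ord (T (a, b)); lia.
Qed.


Definition o0 : 'I_3 := @Ordinal 3 0 isT.
Definition o1 : 'I_3 := @Ordinal 3 1 isT.
Definition o2 : 'I_3 := @Ordinal 3 2 isT.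

Lemma count_full n (T : filling n) (a : 'I_3) : is_SYT T ->
  count (pred1 (val a)) (word T) = n.
Proof.
move=> HT; rewrite -(take_size (word T)) K // size_word.
rewrite (_ : [set b | T (a, b) < 3 * n] = setT) ?cardsT ?card_ord //.
by apply/setP => b; rewrite !inE ltn_ord.
Qed.

Lemma word_ok n (T : filling n) : is_SYT T -> ok (n, 0, 0) (word T).
Proof.
move=> HT; have [Hi Hs Hr Hc] := SYTP HT.
have sub : forall (a a' : 'I_3) k, val a < val a' ->
  #|[set b | T (a', b) < k]| <= #|[set b | T (a, b) < k]|.
  move=> a a' k H; apply: subset_leq_card; apply/subsetP => b; rewrite !inE => Hb.
  exact: ltn_trans (Hc a a' b H) Hb.
apply: ok_of.
- move=> k; rewrite /cN.
  have := K o0 k HT; have := K o1 k HT; have := K o2 k HT; rewrite /= => -> -> ->.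
  split; first by apply: leq_trans (max_card _) _; rewrite card_ord.
  by split; rewrite add0n; apply: sub.
- apply/allP => x; rewrite /word /mkseq => /mapP [j _ ->]; rewrite /rowofn.
  by case: pickP => // c _; exact: ltn_ord.
- exact: (count_full o0 HT).
- by rewrite /cN (count_full o0 HT) (count_full o1 HT).
- by rewrite /cN (count_full o2 HT) (count_full o1 HT).
Qed.

Lemma word_inj n (T T' : filling n) : is_SYT T -> is_SYT T' -> word T = word T' -> T = T'.
Proof.
move=> HT HT' Ew; have [Hi Hs Hr Hc] := SYTP HT; have [Hi' Hs' Hr' Hc'] := SYTP HT'.
apply/ffunP => [[a b]].
have [c' Tc'] := Hs' (T (a, b)).
have Hk := ltn_ord (T (a, b)).
have R1 : rowofn T (T (a, b)) = val a by rewrite rowofnE.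
have R2 : rowofn T' (T (a, b)) = val c'.1 by rewrite -Tc' rowofnE.
have Ea : c'.1 = a.
  apply: val_inj; rewrite -R2 -R1 -!nth_word //; first by rewrite Ew.
have C1 := K a (T (a, b)) HT.
have C2 := K a (T (a, b)) HT'.
rewrite card_row // in C1.
rewrite -Ew C1 -Tc' in C2.
move: Tc' C2 Ea; case: c' {R2} => c1 c2 /= Tc' C2 Ea; subst c1.
rewrite card_row // in C2.
rewrite -Tc'; congr (T' (_, _)); exact: val_inj.
Qed.

Lemma word_Q n (T : filling n) : 3 <= n -> is_SYT T -> Q (word T) = (entry T 1 3 == 7).
Proof.
move=> hn HT; have [Hi Hs Hr Hc] := SYTP HT.
have h2 : 2 < n by lia.
pose b2 : 'I_n := Ordinal h2.
have -> : entry T 1 3 = (T (o0, b2)).+1.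
  rewrite /entry. case: insubP => [i _ Ei|]; last by [].
  case: insubP => [j _ Ej|]; last by move=> /=; rewrite h2.
  have -> : i = o0 by apply: val_inj.
  have -> : j = b2 by apply: val_inj.
  by [].
rewrite eqSS; have h6 : 6 < 3 * n by lia.
have Kc := K o0 6 HT; rewrite /= in Kc.
apply/idP/idP.
- case/andP => /eqP H6 /eqP C6.
  have [c Tc] := Hs (Ordinal h6).
  have R : rowofn T 6 = c.1 by rewrite -(rowofnE c HT) Tc.
  rewrite nth_word // R in H6.
  move: Tc H6; case: c {R} => c1 c2 /= Tc H6.
  have E1 : c1 = o0 by apply: val_inj.
  subst c1.
  rewrite C6 (_ : 6 = T (o0, c2)) ?card_row // in Kc; last by rewrite Tc.
  have E2 : c2 = b2 by apply: val_inj.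
  by subst c2; rewrite Tc.
- move/eqP => H; apply/andP; split.
    by rewrite nth_word // -H rowofnE.
  by rewrite Kc -H card_row.
Qed.


Lemma word_surj n w : size w = 3 * n -> ok (n, 0, 0) w ->
  exists T : filling n, is_SYT T /\ word T = w.
Proof.
move=> Hs Hok; have [Hb [Hl [E0 [E1 E2]]]] := of_ok Hok.
have Cnt : forall a : 'I_3, count (pred1 (val a)) w = n.
  move=> [[|[|[|a]]] Ha] //=.
  - by rewrite -/(cN 1 w) E1 add0n.
  - by rewrite -/(cN 2 w) E2 add0n E1 add0n.
have Bal : forall (a a' : 'I_3) k, val a < val a' ->
    count (pred1 (val a')) (take k w) <= count (pred1 (val a)) (take k w).
  move=> [[|[|[|a]]] Ha] [[|[|[|a']]] Ha'] k //= H; have := Hb k.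
  - by move=> HH; change (cN 1 (take k w) <= cN 0 (take k w)); lia.
  - by move=> HH; change (cN 2 (take k w) <= cN 0 (take k w)); lia.
  - by move=> HH; change (cN 2 (take k w) <= cN 1 (take k w)); lia.
have PS : forall c : 'I_3 * 'I_n,
    [/\ posn w (val c.1) (val c.2) < size w, nth 0 w (posn w (val c.1) (val c.2)) = val c.1
      & count (pred1 (val c.1)) (take (posn w (val c.1) (val c.2)) w) = val c.2].
  move=> c; have := @posn_spec w (val c.1) (val c.2); rewrite Cnt; apply; exact: ltn_ord.
have Hlt : forall c : 'I_3 * 'I_n, posn w (val c.1) (val c.2) < 3 * n.
  by move=> c; have [H1 _ _] := PS c; rewrite -Hs.
pose T : filling n := [ffun c => Ordinal (Hlt c)].
have TE : forall c, val (T c) = posn w (val c.1) (val c.2) by move=> c; rewrite ffunE.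
have Pspec : forall c, nth 0 w (T c) = val c.1 /\ count (pred1 (val c.1)) (take (T c) w) = val c.2.
  by move=> c; rewrite TE; have [_ -> ->] := PS c.
have Tinj : injective T.
  move=> [a b] [a' b'] E; have [A1 B1] := Pspec (a, b); have [A2 B2] := Pspec (a', b').
  rewrite E A2 /= in A1; have Ea : a = a' by apply: val_inj.
  subst a'; rewrite E B2 /= in B1; have Eb : b = b' by apply: val_inj.
  by subst b'.
have Tsurj : forall k : 'I_(3 * n), exists c, T c = k.
  move=> k; have Hk : k < size w by rewrite Hs.
  have Ha : nth 0 w k < 3 := allP Hl _ (mem_nth 0 Hk).
  have Hb' : count (pred1 (nth 0 w k)) (take k w) < n.
    have := count_take_le (pred1 (nth 0 w k)) w k.+1.
    by rewrite count_take_nth // /= eqxx addn1 (Cnt (Ordinal Ha)).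
  exists (Ordinal Ha, Ordinal Hb'); apply: val_inj; rewrite TE /=; exact: posn_uniq.
have HT : is_SYT T.
  apply/and4P; split.
  - by apply/injectiveP.
  - apply/forallP => k; apply/existsP; have [c Hc] := Tsurj k; exists c; by rewrite Hc.
  - apply/forallP => a; apply/forallP => b; apply/forallP => b'; apply/implyP => Hbb.
    rewrite ltnNge; apply/negP => Hle.
    have [_ C1] := Pspec (a, b); have [_ C2] := Pspec (a, b').
    have := count_take_mono (pred1 (val a)) w Hle; rewrite C1 C2 /=; lia.
  - apply/forallP => a; apply/forallP => a'; apply/forallP => b; apply/implyP => Haa.
    rewrite ltnNge; apply/negP => Hle.
    have [N1 C1] := Pspec (a, b); have [N2 C2] := Pspec (a', b).
    have Hj : T (a', b) < size w by rewrite Hs.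
    have X1 := count_take_nth (pred1 (val a)) Hj.
    have X2 := count_take_nth (pred1 (val a')) Hj.
    have X3 := count_take_mono (pred1 (val a)) w Hle.
    have X4 := Bal a a' (T (a', b)).+1 Haa.
    move: X1 X2 X3 X4; rewrite N2 C1 C2 /= eqxx.
    have -> : (val a' == val a) = false by apply/negbTE; rewrite neq_ltn Haa orbT.
    move=> X1 X2 X3; rewrite X1 X2 addn0 addn1 => X4.
    by have := leq_trans X4 X3; rewrite ltnn.
exists T; split => //.
apply: (@eq_from_nth _ 0); first by rewrite size_word Hs.
move=> i; rewrite size_word => Hi; rewrite nth_word // /rowofn.
case: pickP => [c /eqP Hc | Hnone].
  by have [N _] := Pspec c; rewrite -Hc N.
by have [c Hc] := Tsurj (Ordinal Hi); move: (Hnone c); rewrite Hc /= eqxx.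
Qed.


Lemma sum_count (s : seq (seq nat)) (p : pred (seq nat)) : \sum_(w <- s) (p w : nat) = count p s.
Proof. by elim: s => [|x s IH]; rewrite ?big_nil ?big_cons //= IH. Qed.

Lemma card_eq n (P : pred (filling n)) (Qw : pred (seq nat)) :
  (forall T, is_SYT T -> P T = Qw (word T)) ->
  #|[set T | is_SYT T && P T]| = \sum_(w <- allwords (3 * n)) (ok (n, 0, 0) w && Qw w).
Proof.
move=> HPQ.
rewrite sum_count -size_filter cardE -(size_map (@word n)).
apply: perm_size; apply: uniq_perm.
- rewrite map_inj_in_uniq ?enum_uniq //.
  move=> T T'; rewrite !mem_enum !inE => /andP[H _] /andP[H' _]; exact: word_inj.
- exact/filter_uniq/allwords_uniq.
move=> w; rewrite mem_filter; apply/mapP/andP.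
- case=> T; rewrite mem_enum inE => /andP [HT HP] ->; split.
    by rewrite word_ok // -HPQ.
  have [_ [Hl _]] := of_ok (word_ok HT).
  by rewrite mem_allwords size_word eqxx Hl.
- case=> [/andP [Hok HQ] Hmem].
  move: Hmem; rewrite mem_allwords => /andP [/eqP sw _].
  have [T [HT Ew]] := word_surj sw Hok.
  exists T; last by rewrite Ew.
  by rewrite mem_enum inE HT HPQ // Ew.
Qed.


Lemma natr_div a d r : a * d = r -> 0 < d -> (a%:R : rat) = (r%:R / d%:R)%R.
Proof. by move=> <- Hd; rewrite natrM mulfK // pnatr_eq0 -lt0n. Qed.

Theorem mainTheorem6 (n : nat) (hn : (3 <= n)%N) :
  prob_SYT (fun T : filling n => entry T 1 3 == 7%N) =
  ((5 * n * (n + 1) ^ 2 * (n + 2))%:R /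
   (9 * (3 * n - 1) * (3 * n - 2) * (3 * n - 4) * (3 * n - 5))%:R : rat)%R.
Proof.
rewrite /prob_SYT.
rewrite (card_eq (Qw := Q)); last by move=> T HT; rewrite word_Q.
rewrite (_ : [set T | is_SYT T] = [set T : filling n | is_SYT T && true]); last first.
  by apply/setP => T; rewrite !inE andbT.
rewrite (card_eq (Qw := fun _ => true)) //.
have -> : \sum_(w <- allwords (3 * n)) (ok (n, 0, 0) w && true) = cnt (n, 0, 0) (3 * n).
  by apply: eq_bigr => w _; rewrite andbT.
have [k Hk] : exists k, n = k + 3 by exists (n - 3); lia.
subst n.
rewrite event_count.
have HA := cnt_formula (x0 := k) (d1 := 1) (d2 := 0) (m := 3 * k + 2) ltac:(lia).
have HB := cnt_formula (x0 := k + 3) (d1 := 0) (d2 := 0) (m := 3 * (k + 3)) ltac:(lia).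
move: HA HB; set cA := cnt _ (3 * k + 2); set cB := cnt _ (3 * (k + 3)).
rewrite /Dn /Pn.
rewrite (_ : k + 1 + 0 + 2 = k.+3); last by lia.
rewrite (_ : k + 1 + 1 = k.+2); last by lia.
rewrite (_ : k + 3 + 0 + 0 + 2 = k.+4.+1); last by lia.
rewrite (_ : k + 3 + 0 + 1 = k.+4); last by lia.
rewrite (_ : k + 3 = k.+3); last by lia.
rewrite (_ : 3 * k.+3 = (3 * k + 2).+4.+3); last by lia.
rewrite !factS.
set X := (3 * k + 2)`!; set Z := k`!.
have X0 : 0 < X by apply: fact_gt0.
have Z0 : 0 < Z by apply: fact_gt0.
move=> HA HB.
rewrite (_ : (3 * k + 2).+4.+3 - 1 = 3 * k + 8); last by lia.
rewrite (_ : (3 * k + 2).+4.+3 - 2 = 3 * k + 7); last by lia.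
rewrite (_ : (3 * k + 2).+4.+3 - 4 = 3 * k + 5); last by lia.
rewrite (_ : (3 * k + 2).+4.+3 - 5 = 3 * k + 4); last by lia.
rewrite natrM (natr_div HA) ?(natr_div HB); try by rewrite !muln_gt0 Z0.
rewrite !natrM !natrD ?natrX -!natr1.
have Xn : (X%:R : rat) != 0%R by rewrite pnatr_eq0 -lt0n.
have Zn : (Z%:R : rat) != 0%R by rewrite pnatr_eq0 -lt0n.
have kp : (0 <= k%:R :> rat)%R by apply: ler0n.
field.
rewrite Xn Zn /=; clear -kp.
by repeat (apply/andP; split); apply/eqP => H; lra.
Qed.
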